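(* Let $n\ge 2$ and let $\mathbf{x}=(x_1,\dots,x_n)\in\mathbb{R}^n$ be a vector whose entries are either all strictly positive or all strictly negative. Let $M$ be either $M=\mathbf{x}^T\mathbf{x}$ (a positive rank one matrix) or $M=-\mathbf{x}^T\mathbf{x}$ (a negative rank one matrix), and assume the off-diagonal entries $M_{ij}$, $i<j$, are pairwise distinct. Then for every $k>0$ and every $t\in[0,1]$, the $k$-th Betti curve of $M$ satisfies $\beta_k(t)=0$.
   Context: Betti curves of a symmetric matrix. Let $M$ be a real symmetric $n\times n$ matrix whose $\binom{n}{2}$ off-diagonal entries $M_{ij}$ ($i<j$) are pairwise distinct. The ordering matrix $\widehat{M}$ is defined by $\widehat{M}_{ij}=k$ if $M_{ij}$ is the $k$-th smallest off-diagonal entry. For $t\in[0,1]$, $G_t=G_t(M)$ is the graph on vertex set $\{1,\dots,n\}$ with edge set $\{\{i,j\} : \widehat{M}_{ij}\le t\binom{n}{2}\}$ (so edges are added in increasing order of the entries $M_{ij}$; $G_0$ has no edges and $G_1$ is complete). $X(G_t)$ is the clique complex of $G_t$ (every $k$-clique of $G_t$ is filled in by a $(k-1)$-dimensional simplex). The $i$-th Betti curve of $M$ is $\beta_i(t)=\operatorname{rank} H_i(X(G_t);\mathbf{k})$, with $H_i$ simplicial homology with coefficients in a fixed field $\mathbf{k}$. Here $\mathbf{x}$ is a row vector, so $\mathbf{x}^T\mathbf{x}$ is the $n\times n$ matrix with entries $x_ix_j$. *)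

(* Defs.v *)
From HB Require Import structures.
From mathcomp Require Import all_boot all_order all_algebra.
From mathcomp Require Import reals.
Set Implicit Arguments. Unset Strict Implicit. Unset Printing Implicit Defensive.
Import Order.TTheory GRing.Theory Num.Theory.
Local Open Scope ring_scope.

Section Betti.
Variable R : realType.
Variable n : nat.

(* ordering matrix: hatM M i j = number of off-diagonal entries M_ab (a<b)
   that are <= M_ij; with pairwise distinct entries this is k when M_ij is
   the k-th smallest off-diagonal entry. *)
Definition hatM (M : 'M[R]_n) (i j : 'I_n) : nat :=
  #|[set p : 'I_n * 'I_n | (p.1 < p.2)%N && (M p.1 p.2 <= M i j)]|.

Definition Gt_edge (M : 'M[R]_n) (t : R) (i j : 'I_n) : bool :=
  (i != j) && ((hatM M i j)%:R <= t * ('C(n, 2))%:R).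

Definition clique_simplex (M : 'M[R]_n) (t : R) (s : {set 'I_n}) : bool :=
  (s != set0) && [forall i in s, forall j in s, (i != j) ==> Gt_edge M t i j].

Definition NS := #|{: {set 'I_n}}|.
Definition sx (a : 'I_NS) : {set 'I_n} := enum_val a.

Variable F : fieldType.

(* matrix (row-vector convention: chains are row vectors, c |-> c *m bd k)
   of the simplicial boundary map  C_k -> C_{k-1}, on the basis of all
   subsets of vertices; a k-simplex s = {v_0 < ... < v_k} is sent to
   \sum_l (-1)^l (s minus v_l).  Non-simplices give zero rows/columns. *)
Definition bd (M : 'M[R]_n) (t : R) (k : nat) : 'M[F]_NS :=
  \matrix_(a, b)
    if [&& clique_simplex M t (sx a), clique_simplex M t (sx b)
         & #|sx a| == k.+1]
    then \sum_(v in sx a | sx b == sx a :\ v)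
           (-1) ^+ #|[set u in sx a | (u < v)%N]|
    else 0.

(* coordinate subspace C_k of k-chains (spanned by the k-simplices) *)
Definition chains (M : 'M[R]_n) (t : R) (k : nat) : 'M[F]_NS :=
  \matrix_(a, b)
    if [&& a == b, clique_simplex M t (sx a) & #|sx a| == k.+1]
    then 1 else 0.

(* beta_k(t) = dim H_k(X(G_t); F) = dim (ker d_k on C_k) - dim (im d_{k+1}) *)
Definition betti (M : 'M[R]_n) (t : R) (k : nat) : nat :=
  (\rank (chains M t k :&: kermx (bd M t k))%MS - \rank (bd M t k.+1))%N.

End Betti.

(* Main.v *)
Require Import Defs.
From HB Require Import structures.
From mathcomp Require Import all_boot all_order all_algebra.
From mathcomp Require Import reals ring.
Import Order.TTheory GRing.Theory Num.Theory.
Local Open Scope ring_scope.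


Section Alg.
Variables (R : realType) (F : fieldType) (n : nat) (M : 'M[R]_n) (t : R) (a0 : 'I_n).
Hypothesis Hcone : forall i j, Gt_edge M t i j -> i != a0 ->
  Gt_edge M t a0 i && Gt_edge M t i a0.

Definition eps (v : 'I_n) (s : {set 'I_n}) : F :=
  (-1) ^+ #|[set u in s | (u < v)%N]|.

Lemma epsU v w (X : {set 'I_n}) : w \notin X ->
  eps v (w |: X) = (if (w < v)%N then -1 else 1) * eps v X.
Proof.
move=> wX; rewrite /eps.
have -> : [set u in w |: X | (u < v)%N] =
   (if (w < v)%N then w |: [set u in X | (u < v)%N] else [set u in X | (u < v)%N]).
  apply/setP=> u; rewrite !inE; case: ifP => wv; rewrite ?inE;
  by case: (eqVneq u w) => [->|]; rewrite ?wv ?andbF ?orbF.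
case: ifP => _; last by rewrite mul1r.
rewrite cardsU1 inE (negPf wX) /= exprS.
done.
Qed.

Lemma eps_sq v (X : {set 'I_n}) : eps v X * eps v X = 1.
Proof. by rewrite /eps -expr2 -exprM mulnC exprM sqrrN expr1n expr1n. Qed.

Lemma cone_simp s : clique_simplex M t s -> (2 <= #|s|)%N ->
  clique_simplex M t (a0 |: s).
Proof.
move=> /andP[s0 /forallP cl] s2; apply/andP; split.
  by apply/set0Pn; exists a0; rewrite setU11.
have edge_a j : j \in s -> j != a0 -> Gt_edge M t a0 j && Gt_edge M t j a0.
  move=> js ja.
  have : (0 < #|s :\ j|)%N by rewrite (cardsD1 j) js in s2.
  rewrite card_gt0 => /set0Pn[j']; rewrite !inE => /andP[j'j j's].
  apply: Hcone ja.
  by have := implyP (cl j) js => /forallP /(_ j') /implyP /(_ j's) /implyP; apply; rewrite eq_sym.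
apply/forallP=> i; apply/implyP => /setU1P[->|iS];
  apply/forallP=> j; apply/implyP => /setU1P[->|js];
  apply/implyP=> ij.
- by rewrite eqxx in ij.
- by rewrite eq_sym in ij; case/andP: (edge_a j js ij).
- by case/andP: (edge_a i iS ij).
- by have := implyP (cl i) iS => /forallP /(_ j) /implyP /(_ js) /implyP; apply.
Qed.

Let simp := clique_simplex M t.

Definition bdS (k : nat) (s T : {set 'I_n}) : F :=
  if [&& simp s, simp T & #|s| == k.+1]
  then \sum_(v in s | T == s :\ v) eps v s else 0.

Lemma simp_sub (s T : {set 'I_n}) : simp s -> T \subset s -> T != set0 -> simp T.
Proof.
move=> /andP[_ /forallP cl] sub T0; apply/andP; split=> //.
apply/forallP=> i; apply/implyP=> iT; apply/forallP=> j; apply/implyP=> jT.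
by have := implyP (cl i) (subsetP sub i iT) => /forallP /(_ j) /implyP; apply; apply: (subsetP sub).
Qed.

Lemma setU1D1 (a : 'I_n) (X : {set 'I_n}) : a \notin X -> (a |: X) :\ a = X.
Proof.
move=> aX; apply/setP=> u; rewrite !inE; case: (eqVneq u a) => [->|] //=.
by rewrite (negPf aX).
Qed.

Lemma setU1D1C (a v : 'I_n) (X : {set 'I_n}) : v != a -> (a |: X) :\ v = a |: (X :\ v).
Proof.
move=> va; apply/setP=> u; rewrite !inE; case: (eqVneq u a) => [->|] //=.
by rewrite eq_sym va.
Qed.

Lemma eqD1 (a : 'I_n) (T X : {set 'I_n}) : a \in T -> a \notin X ->
  (T == a |: X) = (T :\ a == X).
Proof.
move=> aT aX; apply/eqP/eqP => [->|<-]; first by rewrite setU1D1.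
by rewrite setD1K.
Qed.

Lemma D1_inj (s : {set 'I_n}) v w : v \in s -> w \in s -> (s :\ w == s :\ v) = (v == w).
Proof.
move=> vs ws; apply/eqP/eqP => [h|->] //.
apply/eqP; apply: contraT => vw.
have : v \in s :\ w by rewrite !inE vw.
by rewrite h !inE eqxx.
Qed.

Lemma card2 (s : {set 'I_n}) k : (0 < k)%N -> #|s| = k.+1 -> forall a, a \in s -> s :\ a != set0.
Proof.
move=> k0 sk a aS; rewrite -card_gt0.
by move: (cardsD1 a s); rewrite aS sk add1n => -[<-].
Qed.

Lemma key (k : nat) (s T : {set 'I_n}) : (0 < k)%N -> simp s -> #|s| = k.+1 ->
  (if a0 \notin s then eps a0 s * bdS k.+1 (a0 |: s) T else 0) =
  (s == T)%:R - (if [&& a0 \in T, simp T & #|T| == k.+1]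
                 then eps a0 (T :\ a0) * bdS k s (T :\ a0) else 0).
Proof.
move=> k0 ss sk.
case: (boolP (a0 \in s)) => a0s /=.
  case: (eqVneq s T) => [<-|sT].
    rewrite a0s ss sk eqxx /= /bdS ss sk eqxx (simp_sub _ _ ss (subsetDl _ _) (card2 _ _ k0 sk _ a0s)) /=.
    rewrite (big_pred1 a0); last first.
      move=> v /=; case: (boolP (v \in s)) => vs /=; first by rewrite D1_inj.
      by apply/esym/eqP=> va; move: vs; rewrite va a0s.
    rewrite -{2}(setD1K a0s) epsU ?setD11 // ltnn mul1r eps_sq subrr //.
  rewrite sub0r; case: ifP => [/and3P[a0T _ _]|_]; last by rewrite oppr0.
  rewrite /bdS.
  case: ifP => _; last by rewrite mulr0 oppr0.
  rewrite big_pred0 ?mulr0 ?oppr0 // => v.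
  case: (boolP (v \in s)) => vs; rewrite ?andFb // andTb.
  case: (eqVneq v a0) => [->|va].
    apply/negbTE; apply: contra sT => /eqP h; apply/eqP.
    by rewrite -(setD1K a0s) -h setD1K.
  apply/negbTE/eqP => h; have : a0 \in s :\ v by rewrite !inE eq_sym va a0s.
  by rewrite -h !inE eqxx.

have s2 : (2 <= #|s|)%N by rewrite sk ltnS.
have sa : simp (a0 |: s) := cone_simp _ ss s2.
have ska : #|a0 |: s| = k.+2 by rewrite cardsU1 a0s sk.
have vna v : v \in s -> v != a0 by move=> vs; apply: contraNneq a0s => <-.
have a0D v : a0 \notin s :\ v by rewrite !inE negb_and a0s orbT.
rewrite /bdS sa ska eqxx /= andbT big_mkcondr big_setU1 //= setU1D1 //.
case: (boolP (a0 \in T)) => a0T /=.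
  have sT : s != T by apply: contraNneq a0s => ->.
  rewrite (negPf sT) sub0r.
  have -> : (T == s) = false by rewrite eq_sym (negPf sT).
  rewrite add0r.
  case: (boolP (simp T)) => sTT /=; last by rewrite mulr0 oppr0.
  case: (eqVneq #|T| k.+1) => Tk /=.
    have sTa : simp (T :\ a0) := simp_sub _ _ sTT (subsetDl _ _) (card2 _ _ k0 Tk _ a0T).
    rewrite ss sTa sk eqxx /= big_mkcondr big_distrr big_distrr -sumrN /=.
    apply: eq_bigr => v vs.
    have va := vna v vs.
    rewrite setU1D1C // eqD1 //.
    case: ifP => [/eqP h|_]; last by rewrite !mulr0 oppr0.
    rewrite epsU // -{1}(setD1K vs) epsU ?setD11 // h.
    case: (ltngtP v a0) => h1.
    - by ring.
    - by ring.
    - by move: va; rewrite (val_inj h1) eqxx.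
  rewrite big1 ?mulr0 ?oppr0 // => v vs.
  rewrite setU1D1C ?vna //; case: eqP => // h; exfalso; move: Tk.
  have hc : #|s :\ v| = k by move: (cardsD1 v s); rewrite vs sk add1n => -[].
  by rewrite h cardsU1 a0D hc eqxx.
rewrite subr0.
rewrite big1 ?addr0; last first.
  move=> v vs; rewrite setU1D1C ?vna //.
  by have -> : (T == a0 |: (s :\ v)) = false by apply: contraNF a0T => /eqP ->; rewrite setU11.
case: (eqVneq s T) => [<-|sT].
  by rewrite ss epsU // ltnn mul1r eps_sq.
by case: (simp T); rewrite mulr0.
Qed.

Definition Hc : 'M[F]_(NS n) :=
  \matrix_(a, b) if (a0 \notin sx a) && (sx b == a0 |: sx a) then eps a0 (sx a) else 0.

Lemma bdE k a b : bd F M t k a b = bdS k (sx a) (sx b).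
Proof. by rewrite mxE. Qed.

Lemma sx_eq (a b : 'I_(NS n)) : (sx a == sx b) = (a == b).
Proof. by apply/eqP/eqP => [h|->] //; apply: enum_val_inj. Qed.

Lemma HdE k a c : (Hc *m bd F M t k) a c =
  if a0 \notin sx a then eps a0 (sx a) * bdS k (a0 |: sx a) (sx c) else 0.
Proof.
rewrite mxE; case: (boolP (a0 \notin sx a)) => h.
  rewrite (bigD1 (enum_rank (a0 |: sx a))) //= big1 ?addr0.
    by rewrite mxE /sx enum_rankK h eqxx /= bdE /sx enum_rankK.
  move=> b nb; rewrite mxE h /=.
  have -> : (sx b == a0 |: sx a) = false.
    apply: contraNF nb => /eqP <-; apply/eqP; rewrite /sx enum_valK //.
  by rewrite mul0r.
by rewrite big1 // => b _; rewrite mxE (negPf h) /= mul0r.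
Qed.

Lemma cycle_bound k (u : 'rV[F]_(NS n)) : (0 < k)%N ->
  (forall a, u 0 a != 0 -> simp (sx a) && (#|sx a| == k.+1)) ->
  u *m bd F M t k = 0 -> u *m Hc *m bd F M t k.+1 = u.
Proof.
move=> k0 hu hz; apply/rowP => c; rewrite -mulmxA mxE.
set G := [&& a0 \in sx c, simp (sx c) & #|sx c| == k.+1].
set g : F := if G then eps a0 (sx c :\ a0) else 0.
set c' := enum_rank (sx c :\ a0).
transitivity (\sum_a (u 0 a * (a == c)%:R - g * (u 0 a * bd F M t k a c'))).
  apply: eq_bigr => a _.
  case: (eqVneq (u 0 a) 0) => [->|ua]; first by rewrite !mul0r mulr0 subr0.
  case/andP: (hu a ua) => sa /eqP sk.
  rewrite HdE key // sx_eq bdE /c' /sx enum_rankK -/(sx _) /g.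
  rewrite /G; clear g; case: ifP => _; rewrite ?mul0r ?subr0 ?mulr0 // mulrBr mulrCA //.
rewrite sumrB -mulr_sumr.
have -> : \sum_a u 0 a * bd F M t k a c' = (u *m bd F M t k) 0 c' by rewrite mxE.
rewrite hz mxE mulr0 subr0.
rewrite (bigD1 c) //= eqxx mulr1 big1 ?addr0 // => a /negPf ->; by rewrite mulr0.
Qed.

Lemma betti0 k : (0 < k)%N -> betti F M t k = 0%N.
Proof.
move=> k0; apply/eqP; rewrite /betti subn_eq0; apply: mxrankS.
apply/row_subP => i.
set r := row i _.
have rC : (r <= chains F M t k)%MS by apply: submx_trans (row_sub i _) (capmxSl _ _).
have rK : r *m bd F M t k = 0.
  apply/eqP; rewrite -sub_kermx; exact: submx_trans (row_sub i _) (capmxSr _ _).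
case/submxP: rC => D rD.
rewrite -(@cycle_bound k r) ?submxMl //.
move=> a; rewrite rD mxE (bigD1 a) //= big1 ?addr0.
  by rewrite mxE eqxx /=; case: ifP => //; rewrite mulr0 eqxx.
by move=> b ba; rewrite mxE (negPf ba) mulr0.
Qed.
End Alg.

Lemma hat_mono (R : realType) n (M : 'M[R]_n) i j i' j' :
  M i' j' <= M i j -> (hatM M i' j' <= hatM M i j)%N.
Proof.
move=> h; apply: subset_leq_card; apply/subsetP => p; rewrite !inE.
by case/andP=> -> hp /=; apply: le_trans hp h.
Qed.

Lemma cone_of (R : realType) n (M : 'M[R]_n) t a0 :
  (forall i j, M i j = M j i) -> (forall i j, M a0 i <= M j i) ->
  forall i j, Gt_edge M t i j -> i != a0 -> Gt_edge M t a0 i && Gt_edge M t i a0.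
Proof.
move=> Ms Ml i j /andP[ij hij] ia.
have h1 : (hatM M a0 i <= hatM M i j)%N by apply: hat_mono; rewrite (Ms i j); apply: Ml.
have h2 : (hatM M i a0 <= hatM M i j)%N by apply: hat_mono; rewrite (Ms i a0) (Ms i j); apply: Ml.
rewrite /Gt_edge eq_sym ia /=; apply/andP; split;
  (apply: le_trans hij; rewrite ler_nat //).
Qed.

Theorem theorem1 (R : realType) (F : fieldType) (n : nat) (hn : (2 <= n)%N)
  (x : 'rV[R]_n)
  (hx : (forall i, 0 < x 0 i) \/ (forall i, x 0 i < 0))
  (M : 'M[R]_n)
  (hM : M = x^T *m x \/ M = - (x^T *m x))
  (hdist : forall i j i' j' : 'I_n, (i < j)%N -> (i' < j')%N ->
           M i j = M i' j' -> i = i' /\ j = j') :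
  forall (k : nat), (0 < k)%N -> forall t : R, 0 <= t <= 1 ->
    betti F M t k = 0%N.
Proof.
move=> k k0 t _.
have i0 : 'I_n by exists 0%N; apply: leq_trans hn.
have [amin Hmin] : exists a, forall j, x 0 a <= x 0 j.
  by case: (arg_minP (i0:=i0) (P:=xpredT) (fun i => x 0 i) (erefl true)) => a _ H; exists a => j; apply: H.
have [amax Hmax] : exists a, forall j, x 0 j <= x 0 a.
  by case: (arg_maxP (i0:=i0) (P:=xpredT) (fun i => x 0 i) (erefl true)) => a _ H; exists a => j; apply: H.
have xxE i j : (x^T *m x) i j = x 0 i * x 0 j.
  by rewrite mxE big_ord1 mxE.
have xxN i j : (- (x^T *m x)) i j = - (x 0 i * x 0 j) by rewrite mxE xxE.
have [a0 [Ms Ml]] : exists a0, (forall i j, M i j = M j i) /\ (forall i j, M a0 i <= M j i).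
  case: hM => ->.
    case: hx => hx.
      exists amin; split=> [i j|i j]; rewrite !xxE ?(mulrC (x 0 i)) //.
      by apply: ler_wpM2r; [apply: ltW|apply: Hmin].
    exists amax; split=> [i j|i j]; rewrite !xxE ?(mulrC (x 0 i)) //.
    by apply: ler_wnM2r; [apply: ltW|apply: Hmax].
  case: hx => hx.
    exists amax; split=> [i j|i j]; rewrite !xxN ?(mulrC (x 0 i)) // lerN2.
    by apply: ler_wpM2r; [apply: ltW|apply: Hmax].
  exists amin; split=> [i j|i j]; rewrite !xxN ?(mulrC (x 0 i)) // lerN2.
  by apply: ler_wnM2r; [apply: ltW|apply: Hmin].
exact: (@betti0 R F n M t a0 (@cone_of R n M t a0 Ms Ml) k k0).
Qed.
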